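(* Let $x\in V(T)$, let $s$ be a worst-case scenario of $T$ with respect to $x$, and let $y\in V(T)\setminus\{x\}$ be a prime broadcast center of $T$ under $s$ such that $w^{s}_{a,b}=w^{\alpha_{x,y}}_{a,b}$ for every $(a,b)\in P_{x,y}\cup E(T_{y,x})$. Let $\mu$ be the neighbour of $y$ on the $y$–$x$ path. Suppose $y$ has $h\ge1$ neighbours $u_1,\dots,u_h$ in $\bar T_{y,x}$, and let $a_1\ge a_2\ge\dots\ge a_h$ be the values $w^s_{y,u_k}+b^s(u_k,\bar T_{u_k,y})$, $1\le k\le h$, sorted in nonincreasing order. Let $\tau_0$ be the smallest index $k\in\{1,\dots,h\}$ maximizing $k\rho+a_k$. If $$w^s_{y,\mu}+b^s(\mu,T_{y,x})\ge a_{\tau_0},$$ then $\alpha_{x,y}$ is a worst-case scenario of $T$ with respect to $x$.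
   Context: $T$ is a finite tree; each edge $(u,v)$ carries an interval $[w^-_{u,v},w^+_{u,v}]$ of non-negative reals. A scenario $s$ assigns to every edge a weight $w^s_{u,v}\in[w^-_{u,v},w^+_{u,v}]$; $C$ is the set of all scenarios. A constant $\rho>0$ is fixed. Broadcast time (postal model): for a subtree $G$ of $T$ and $u\in V(G)$, $b^s(u,G)=0$ if $u$ has no neighbour in $G$; otherwise, if $v_1,\dots,v_h$ are the neighbours of $u$ in $G$ and $G_{v}$ is the component of $G-u$ containing $v$, $b^s(u,G)=\min_{\pi}\max_{1\le k\le h}\big(k\rho+w^s_{u,v_{\pi(k)}}+b^s(v_{\pi(k)},G_{v_{\pi(k)}})\big)$ over permutations $\pi$. $B^s=\{u: b^s(u,T)\le b^s(v,T)\ \forall v\}$. For distinct $x,y$, $T_{x,y}$ is the component of $T-x$ containing $y$ and $\bar T_{x,y}$ the subtree induced by $V(T)\setminus V(T_{x,y})$. $P_{x,y}$ is the set of edges of the $x$–$y$ path. A vertex $\hat\kappa\in B^s$ is a prime broadcast center under $s$ if $b^s(\hat\kappa,\bar T_{\hat\kappa,u})\ge b^s(u,\bar T_{u,\hat\kappa})$ for every neighbour $u$ of $\hat\kappa$. Regret $r^s_{x,y}=b^s(x,T)-b^s(y,T)$; $\mathrm{max\_r}(x)=\max\{r^s_{x,y}:y\in V(T),s\in C\}$; $s'$ is a worst-case scenario w.r.t. $x$ if $\mathrm{max\_r}(x)=r^{s'}_{x,y'}$ for some $y'$. Base scenario: for $v\neq x$, $\alpha_{x,v}$ has $w^{\alpha_{x,v}}_{a,b}=w^+_{a,b}$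 if $(a,b)\in P_{x,v}\cup E(\bar T_{v,x})$ and $w^-_{a,b}$ otherwise. *)

(* Defs.v *)
From HB Require Import structures.
From mathcomp Require Import all_boot all_order all_algebra.
From mathcomp Require Import boolp reals.
Set Implicit Arguments. Unset Strict Implicit. Unset Printing Implicit Defensive.
Import Order.TTheory GRing.Theory Num.Theory.
Local Open Scope ring_scope.

Section Broadcast.
Variables (R : realType) (V : finType) (e : rel V).

(** A finite tree: e symmetric, irreflexive, connected, with |V|-1 edges
    (each undirected edge counted as two ordered pairs). *)
Definition is_tree : Prop :=
  [/\ symmetric e, irreflexive e, (forall a b : V, connect e a b) &
      #|[set p : V * V | e p.1 p.2]| = ((#|V| - 1).*2)%N ].

Definition comp (S : {set V}) (u v : V) : {set V} :=
  [set z in S :\ u |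
     connect (fun a b => [&& e a b, a \in S :\ u & b \in S :\ u]) v z].

Definition Tsub (x y : V) : {set V} := comp [set: V] x y.
Definition Tbar (x y : V) : {set V} := ~: Tsub x y.

Definition inE_set (G : {set V}) (a b : V) : bool := [&& e a b, a \in G & b \in G].

Definition on_path (x y a b : V) : Prop :=
  exists p : seq V, [/\ path e x p, last x p = y, uniq (x :: p) &
    exists2 i, (i < size p)%N &
      ((nth x (x :: p) i == a) && (nth x (x :: p) i.+1 == b)) ||
      ((nth x (x :: p) i == b) && (nth x (x :: p) i.+1 == a))].

Definition maxl (l : seq R) : R :=
  if l is r :: t then foldr Num.max r t else 0.
Definition minl (l : seq R) : R :=
  if l is r :: t then foldr Num.min r t else 0.

(** Broadcast time b^s(u,G) in the postal model, G given by its vertex set S,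
    computed with fuel (the fuel #|S| is always sufficient). *)
Fixpoint bfuel (rho : R) (s : V -> V -> R) (n : nat) (u : V) (S : {set V}) : R :=
  match n with
  | 0 => 0
  | n'.+1 =>
    let N := enum [set v in S | e u v] in
    let c (v : V) := s u v + bfuel rho s n' v (comp S u v) in
    match N with
    | [::] => 0
    | v0 :: _ =>
      minl [seq maxl [seq (i.+1)%:R * rho + c (nth v0 q i) | i <- iota 0 (size q)]
           | q <- permutations N]
    end
  end.

Definition btime (rho : R) (s : V -> V -> R) (u : V) (S : {set V}) : R :=
  bfuel rho s #|S| u S.

Definition scenario (wlo whi s : V -> V -> R) : Prop :=
  forall a b, e a b -> wlo a b <= s a b <= whi a b /\ s a b = s b a.

Definition regret rho (s : V -> V -> R) (x y : V) : R :=
  btime rho s x [set: V] - btime rho s y [set: V].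

Definition worst_case rho (wlo whi : V -> V -> R) (x : V) (s' : V -> V -> R) : Prop :=
  scenario wlo whi s' /\
  exists y', forall (s : V -> V -> R) (y : V), scenario wlo whi s ->
    regret rho s x y <= regret rho s' x y'.

Definition in_center rho (s : V -> V -> R) (u : V) : Prop :=
  forall v, btime rho s u [set: V] <= btime rho s v [set: V].

Definition prime_center rho (s : V -> V -> R) (k : V) : Prop :=
  in_center rho s k /\
  forall u, e k u -> btime rho s u (Tbar u k) <= btime rho s k (Tbar k u).

Definition alpha (wlo whi : V -> V -> R) (x v : V) : V -> V -> R :=
  fun a b => if `[< on_path x v a b \/ inE_set (Tbar v x) a b >] then whi a b
             else wlo a b.

End Broadcast.

(* Main.v *)
Require Import Defs.
From HB Require Import structures.
From mathcomp Require Import all_boot all_order all_algebra.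
From mathcomp Require Import boolp reals.
From mathcomp Require Import zify ring lra.
Import Order.TTheory GRing.Theory Num.Theory.
Local Open Scope ring_scope.
Set Implicit Arguments. Unset Strict Implicit. Unset Printing Implicit Defensive.

Section Lists.
Variable R : realType.

Lemma maxl_ge (l : seq R) z : z \in l -> z <= maxl l.
Proof.
case: l => [//|r t] /=; rewrite inE => /orP [/eqP ->|].
  elim: t => [|a t IH] /=; first by [].
  by rewrite le_max IH orbT.
elim: t => [//|a t IH]; rewrite inE => /orP [/eqP ->|H] /=.
  by rewrite le_max lexx.
by rewrite le_max (IH H) orbT.
Qed.

Lemma maxl_mem (l : seq R) : l != [::] -> maxl l \in l.
Proof.
case: l => [//|r t] _ /=.
elim: t => [|a t IH] /=; first by rewrite inE.
rewrite /Num.max; case: ifP => _.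
  move: IH; rewrite !inE => /orP [->|->]; by rewrite ?orbT.
by rewrite !inE eqxx orbT.
Qed.

Lemma minl_le (l : seq R) z : z \in l -> minl l <= z.
Proof.
case: l => [//|r t] /=; rewrite inE => /orP [/eqP ->|].
  elim: t => [|a t IH] /=; first by [].
  by rewrite ge_min IH orbT.
elim: t => [//|a t IH]; rewrite inE => /orP [/eqP ->|H] /=.
  by rewrite ge_min lexx.
by rewrite ge_min (IH H) orbT.
Qed.

Lemma minl_mem (l : seq R) : l != [::] -> minl l \in l.
Proof.
case: l => [//|r t] _ /=.
elim: t => [|a t IH] /=; first by rewrite inE.
rewrite /Num.min; case: ifP => _.
  by rewrite !inE eqxx orbT.
move: IH; rewrite !inE => /orP [->|->]; by rewrite ?orbT.
Qed.

Lemma maxl_le (l : seq R) t : l != [::] -> (forall z, z \in l -> z <= t) -> maxl l <= t.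
Proof. by move=> /maxl_mem H1 H2; apply: H2. Qed.

End Lists.

Section Fv.
Variables (R : realType) (V : finType) (rho : R).
Hypothesis Hrho : 0 <= rho.

Definition Phi (d : V) (q : seq V) (c : V -> R) : R :=
  maxl [seq (i.+1)%:R * rho + c (nth d q i) | i <- iota 0 (size q)].

Definition Fv (N : seq V) (c : V -> R) : R :=
  match N with
  | [::] => 0
  | v0 :: _ => minl [seq Phi v0 q c | q <- permutations N]
  end.

Lemma Phi_ge d q c i : (i < size q)%N -> (i.+1)%:R * rho + c (nth d q i) <= Phi d q c.
Proof.
move=> Hi; apply: maxl_ge; apply/mapP; exists i => //.
by rewrite mem_iota add0n Hi.
Qed.

Lemma Phi_mem d q c : q != [::] ->
  exists2 i, (i < size q)%N & Phi d q c = (i.+1)%:R * rho + c (nth d q i).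
Proof.
move=> Hq.
have : Phi d q c \in [seq (i.+1)%:R * rho + c (nth d q i) | i <- iota 0 (size q)].
  apply: maxl_mem; case: q Hq => //.
case/mapP => i; rewrite mem_iota add0n => Hi ->; by exists i.
Qed.

Lemma Phi_def d d' q c : Phi d q c = Phi d' q c.
Proof.
rewrite /Phi; apply: f_equal; apply/eq_in_map => i; rewrite mem_iota add0n => Hi /=.
by rewrite (set_nth_default d' d Hi).
Qed.

Lemma Fv_le N c q d : perm_eq q N -> Fv N c <= Phi d q c.
Proof.
case: N => [|v0 N] Hq.
  by move: (perm_size Hq); case: q Hq.
rewrite /Fv (Phi_def d v0); apply: minl_le; apply/mapP; exists q => //.
by rewrite mem_permutations.
Qed.

Lemma Fv_mem N c d : N != [::] -> exists2 q, perm_eq q N & Fv N c = Phi d q c.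
Proof.
case: N => [//|v0 N] _.
have : Fv (v0 :: N) c \in [seq Phi v0 q c | q <- permutations (v0 :: N)].
  apply: minl_mem.
  have : v0 :: N \in permutations (v0 :: N) by rewrite mem_permutations.
  by case: (permutations _).
case/mapP => q; rewrite mem_permutations => Hq ->; exists q => //.
exact: Phi_def.
Qed.

Lemma Fv_mono N c c' : (forall v, v \in N -> c v <= c' v) -> Fv N c <= Fv N c'.
Proof.
case: N => [|v0 N] H; first by [].
have [q Hq ->] := Fv_mem c' v0 (isT : v0 :: N != [::]).
have Hq0 : q != [::] by move: (perm_size Hq); case: q Hq.
apply: le_trans (Fv_le c v0 Hq) _.
have [j Hj ->] := Phi_mem v0 c Hq0.
apply: (le_trans _ (Phi_ge v0 c' Hj)).
rewrite lerD2l; apply: H; rewrite -(perm_mem Hq); exact: mem_nth.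
Qed.

Lemma Fv_ext N c c' : (forall v, v \in N -> c v = c' v) -> Fv N c = Fv N c'.
Proof.
move=> H; apply/eqP; rewrite eq_le !Fv_mono // => v Hv; by rewrite H.
Qed.

Lemma Fv_lb N c v : v \in N -> rho + c v <= Fv N c.
Proof.
move=> Hv; have HN : N != [::] by case: N Hv.
have [q Hq ->] := Fv_mem c v HN.
have Hvq : v \in q by rewrite (perm_mem Hq).
apply: le_trans (Phi_ge v c (_ : index v q < size q)%N); last by rewrite index_mem.
rewrite nth_index // lerD2r.
by rewrite -{1}[rho]mul1r ler_wpM2r // ler1n.
Qed.

Lemma Fv_nonneg N c : (forall v, v \in N -> 0 <= c v) -> 0 <= Fv N c.
Proof.
case: N => [|v0 N] H; first by [].
apply: le_trans (Fv_lb c (mem_head v0 N)).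
by apply: addr_ge0 => //; apply: H; exact: mem_head.
Qed.

Lemma Fv_ub N c v : v \in N ->
  Fv N c <= Num.max (rho + c v) (rho + Fv (rem v N) c).
Proof.
move=> Hv; have HN := perm_to_rem Hv.
case Er: (rem v N) => [|w r].
  rewrite Er perm_sym in HN.
  apply: le_trans (Fv_le c v HN) _.
  by rewrite /Phi /= mul1r le_max lexx.
have [q' Hq' Eq] := Fv_mem c v (isT : w :: r != [::]).
rewrite -Er in Hq'.
have Hq : perm_eq (v :: q') N by rewrite perm_sym (perm_trans HN) // perm_cons perm_sym.
apply: le_trans (Fv_le c v Hq) _.
have [i Hi ->] := Phi_mem v c (isT : v :: q' != [::]).
case: i Hi => [|i] Hi /=; first by rewrite mul1r le_max lexx.
rewrite le_max; apply/orP; right.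
rewrite -/(Fv (w :: r) c) Eq.
apply: (le_trans (_ : _ <= rho + ((i.+1)%:R * rho + c (nth v q' i)))).
  by rewrite -natr1 mulrDl mul1r addrA [rho + _]addrC.
rewrite lerD2l; apply: Phi_ge; by [].
Qed.

Lemma nth_filter_ge (P : pred V) d (q : seq V) i : (i < size (filter P q))%N ->
  exists2 j, (i <= j < size q)%N & nth d (filter P q) i = nth d q j.
Proof.
elim: q i => [//|a q IH] i /=.
case: (P a) => /=.
  case: i => [|i] /= Hi; first by exists 0%N.
  have [j Hj E] := IH i Hi; exists j.+1 => //.
move=> Hi; have [j Hj E] := IH i Hi; exists j.+1 => //=.
by case/andP: Hj => H1 H2; rewrite ltnS H2 andbT; apply: leqW.
Qed.

Lemma Fv_filter N c (P : pred V) : (forall v, v \in N -> 0 <= c v) ->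
  Fv (filter P N) c <= Fv N c.
Proof.
move=> Hc; case EN: N => [|v0 N']; first by rewrite /=.
have HN0 : N != [::] by rewrite EN.
rewrite -EN.
have [q Hq ->] := Fv_mem c v0 HN0.
case Ef: (filter P N) => [|w r].
  apply: le_trans (Fv_le c v0 Hq).
  apply: Fv_nonneg => v Hv; exact: Hc.
have Hf : perm_eq (filter P q) (filter P N) by exact: perm_filter.
rewrite -Ef; apply: le_trans (Fv_le c v0 Hf) _.
have Hfq : filter P q != [::] by move: (perm_size Hf); rewrite Ef; case: (filter P q).
have [i Hi ->] := Phi_mem v0 c Hfq.
have [j /andP [Hij Hj] ->] := nth_filter_ge v0 Hi.
apply: le_trans (Phi_ge v0 c Hj); rewrite lerD2r.
apply: ler_wpM2r => //; by rewrite ler_nat.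
Qed.

Lemma Fv_cnt (N : seq V) (c : V -> R) (k : nat) (t : R) : (1 <= k)%N -> (k <= count (fun v => (t <= c v)%R) N)%N ->
  k%:R * rho + t <= Fv N c.
Proof.
move=> Hk Hcnt.
have HN : N != [::] by case: N Hcnt => //=; case: k Hk.
case: N HN Hcnt => [//|v0 N'] _ Hcnt.
have [q Hq ->] := Fv_mem c v0 (isT : v0 :: N' != [::]).
rewrite -((permP Hq) (fun v => (t <= c v)%R)) in Hcnt.
set P := (fun v => t <= c v) in Hcnt.
have : has P (drop k.-1 q).
  rewrite has_count.
  have H1 : (count P (take k.-1 q) <= k.-1)%N.
    apply: leq_trans (count_size _ _) _; rewrite size_take; by case: ltnP.
  move: Hcnt; rewrite -{1}(cat_take_drop k.-1 q) count_cat.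
  by move: H1; case: (k) Hk => //= k' _; lia.
case/(has_nthP v0) => i Hi; rewrite nth_drop => HP.
rewrite size_drop in Hi.
have Hs : (k.-1 + i < size q)%N by rewrite -ltn_subRL.
apply: le_trans (Phi_ge v0 c Hs); apply: lerD.
  apply: ler_wpM2r => //; rewrite ler_nat; lia.
exact: HP.
Qed.

End Fv.

Section EdgeCount.
Variables (V : finType) (g : rel V).
Hypotheses (gsym : symmetric g) (girr : irreflexive g)
  (gcon : forall a b, connect g a b).

Lemma edge_count_lb : ((#|V| - 1).*2 <= #|[set p : V * V | g p.1 p.2]|)%N.
Proof.
case: (pickP (fun _ : V => true)) => [r _|H0]; last first.
  have -> : #|V| = 0%N by apply: eq_card0 => v; move: (H0 v).
  by [].
pose Rk := fix Rk (k : nat) : {set V} :=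
  if k is k'.+1 then Rk k' :|: [set v | [exists w in Rk k', g v w]] else [set r].
have step : forall p a, path g a p -> (exists k, a \in Rk k) -> exists k, last a p \in Rk k.
  elim=> [|b p IH] a /=; first by [].
  case/andP => Hab Hp [k Hk]; apply: IH => //; exists k.+1.
  rewrite /= inE; apply/orP; right; rewrite inE; apply/existsP; exists a.
  by rewrite Hk gsym.
have reach : forall v, exists k, v \in Rk k.
  move=> v; have /connectP [p Hp ->] := gcon r v.
  apply: (step p r Hp); exists 0%N; by rewrite /= inE.
pose d v := ex_minn (reach v).
have dP : forall v, v \in Rk (d v) by move=> v; rewrite /d; case: ex_minnP.
have dmin : forall v k, v \in Rk k -> (d v <= k)%N.
  by move=> v k Hk; rewrite /d; case: ex_minnP => m _ /(_ k Hk).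
pose par v := odflt r [pick w | (w \in Rk (d v).-1) && g v w].
have parP : forall v, v != r -> g v (par v) /\ (d (par v) < d v)%N.
  move=> v Hv; have Hd : (0 < d v)%N.
    case E: (d v) => //; have := dP v; rewrite E /= inE => /eqP E'.
    by rewrite E' eqxx in Hv.
  have Hex : exists w, (w \in Rk (d v).-1) && g v w.
    have := dP v; case E: (d v) Hd => [//|k] _ /=; rewrite inE => /orP [H|].
      by have := dmin v k H; rewrite E ltnn.
    by rewrite inE => /existsP [w /andP [Hw Hg]]; exists w; rewrite Hw.
  rewrite /par; case: pickP => [w /andP [Hw Hg]|Hn]; last first.
    by case: Hex => w; rewrite Hn.
  split => //=; have := dmin w _ Hw; case: (d v) Hd => //= k _ H; exact: H.
pose A := [set v | v != r].
pose f1 := fun v => (v, par v). pose f2 := fun v => (par v, v).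
have inj1 : injective f1 by move=> u v [].
have inj2 : injective f2 by move=> u v [].
have sub : (f1 @: A) :|: (f2 @: A) \subset [set p : V * V | g p.1 p.2].
  apply/subsetP => p; rewrite in_setU; case/orP => /imsetP [v]; rewrite inE => Hv ->;
    have Hv' : v != r by [move: Hv; rewrite inE];
    rewrite /=; case: (parP v Hv') => Hg _ //; by rewrite gsym.
have dis : (f1 @: A) :&: (f2 @: A) = set0.
  apply/setP => pp; rewrite in_setI in_set0; apply/negP => /andP [H1 H2].
  case/imsetP: H1 => u1 Hu1 E1; case/imsetP: H2 => u2 Hu2 E2.
  rewrite E1 /f1 /f2 in E2; case: E2 => E3 E4.
  have Hu1' : u1 != r by move: Hu1; rewrite inE.
  have Hu2' : u2 != r by move: Hu2; rewrite inE.
  have [_ L1] := parP u1 Hu1'; have [_ L2] := parP u2 Hu2'.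
  move: L1 L2; rewrite -E3 E4 => L1 L2.
  by have := ltn_trans L1 L2; rewrite ltnn.
have cA : #|A| = (#|V| - 1)%N.
  by rewrite subn1 -(cardsC1 r); apply: eq_card => w0; rewrite !inE.
apply: leq_trans (subset_leq_card sub).
by rewrite cardsU dis cards0 subn0 !card_imset // cA addnn.
Qed.

End EdgeCount.

Section Tree.
Variables (V : finType) (e : rel V).
Hypothesis tree : is_tree e.

Lemma esym : symmetric e. Proof. by case: tree. Qed.
Lemma eirr : irreflexive e. Proof. by case: tree. Qed.
Lemma econ : forall a b, connect e a b. Proof. by case: tree. Qed.
Lemma ecard : #|[set p : V * V | e p.1 p.2]| = ((#|V| - 1).*2)%N.
Proof. by case: tree. Qed.

Lemma e_neq a b : e a b -> a != b.
Proof. by apply: contraTneq => ->; rewrite eirr. Qed.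

Definition restr (A : {set V}) : rel V := fun a b => [&& e a b, a \in A & b \in A].

Lemma restr_sym A : symmetric (restr A).
Proof. by move=> a b; rewrite /restr esym; case: (e b a); case: (a \in A); case: (b \in A). Qed.

Lemma restr_path (A : {set V}) u p : path e u p -> all (mem A) (u :: p) -> path (restr A) u p.
Proof.
elim: p u => [//|v p IH] u /= /andP [Huv Hp] /and3P [Hu Hv Hall].
by rewrite /restr Huv Hu Hv /= IH //= Hv.
Qed.

Lemma restr_in (A : {set V}) u w : connect (restr A) u w -> u \in A -> w \in A.
Proof.
case/connectP => p Hp ->; elim: p u Hp => [//|v p IH] u /= /andP [H Hp] _.
case/and3P: H => _ _ Hv; exact: IH Hp Hv.
Qed.

Lemma restr_mono (A B : {set V}) u w : A \subset B -> connect (restr A) u w -> connect (restr B) u w.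
Proof.
move=> /subsetP HAB; apply: connect_sub => a b /and3P [H Ha Hb]; apply: connect1.
by rewrite /restr H !HAB.
Qed.

Lemma restr_closure (A B : {set V}) c z : connect (restr A) c z ->
  (forall w, connect (restr A) c w -> w \in B) ->
  connect (restr (A :&: B)) c z.
Proof.
case/connectP => p Hp -> HB; apply/connectP; exists p => //.
have gen : forall q u, connect (restr A) c u -> path (restr A) u q ->
    path (restr (A :&: B)) u q.
  elim=> [//|v q IH] u Hcu /= /andP [H Hq].
  have Hcv : connect (restr A) c v by apply: connect_trans Hcu (connect1 H).
  case/and3P: H => He Hu Hv.
  by rewrite /restr He !inE Hu Hv (HB _ Hcu) (HB _ Hcv) /= IH.
exact: gen (connect0 _ _) Hp.
Qed.

Lemma inTsub a b z : (z \in Tsub e a b) = (z != a) && connect (restr ([set: V] :\ a)) b z.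
Proof. by rewrite /Tsub /comp inE in_setD1 in_setT andbT. Qed.

Lemma Tsub_self a b : e a b -> b \in Tsub e a b.
Proof. by move=> H; rewrite inTsub connect0 andbT eq_sym e_neq. Qed.

Lemma Tsub_nb a b w : e a b -> e b w -> (w \in Tsub e a b) = (w != a).
Proof.
move=> Hab Hbw; rewrite inTsub; case: eqP => //= Hwa.
apply: connect1; rewrite /restr Hbw !in_setD1 !in_setT !andbT.
by rewrite eq_sym e_neq //=; apply/eqP.
Qed.

Lemma Tsub_notin a b : a \notin Tsub e a b.
Proof. by rewrite inTsub eqxx. Qed.

Lemma bridge a b z : e a b -> z \in Tsub e a b -> z \in Tsub e b a -> False.
Proof.
move=> Hab; rewrite !inTsub => /andP [Hza Hbz] /andP [Hzb Haz].
pose e' := fun u v => e u v && ~~ (((u == a) && (v == b)) || ((u == b) && (v == a))).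
have e'sym : symmetric e'.
  move=> u v; rewrite /e' esym.
  by case: (u == a); case: (u == b); case: (v == a); case: (v == b); rewrite ?andbF.
have e'irr : irreflexive e'. by move=> u; rewrite /e' eirr.
have sub1 : forall A : {set V}, a \notin A \/ b \notin A -> subrel (restr A) (connect e').
  move=> A HA u v /and3P [H Hu Hv]; apply: connect1; rewrite /e' H /=.
  case: HA => HA; apply/negP => /orP [] /andP [/eqP E1 /eqP E2]; subst;
    by rewrite ?Hu ?Hv in HA.
have C1 : connect e' b z.
  apply: (connect_sub (sub1 ([set: V] :\ a) _)) Hbz; left; by rewrite in_setD1 eqxx.
have C2 : connect e' a z.
  apply: (connect_sub (sub1 ([set: V] :\ b) _)) Haz; right; by rewrite in_setD1 eqxx.
have Cab : connect e' a b.
  apply: connect_trans C2 _; by rewrite (sym_connect_sym e'sym).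
have e'con : forall u v, connect e' u v.
  move=> u v; apply: (connect_sub _ (econ u v)) => p q H.
  case E1: ((p == a) && (q == b)).
    by case/andP: E1 => /eqP -> /eqP ->.
  case E2: ((p == b) && (q == a)).
    by case/andP: E2 => /eqP -> /eqP ->; rewrite (sym_connect_sym e'sym).
  by apply: connect1; rewrite /e' H E1 E2.
have Hlb := edge_count_lb e'sym e'con.
have Hab' : a != b by exact: e_neq.
have E : [set p : V * V | e' p.1 p.2] = [set p : V * V | e p.1 p.2] :\ (a, b) :\ (b, a).
  apply/setP => [[u v]]; rewrite !inE /= /e' !xpair_eqE.
  by case: (e u v); case: (u == a); case: (u == b); case: (v == a); case: (v == b).
have c2 : #|[set p : V * V | e p.1 p.2]| = (#|[set p : V * V | e' p.1 p.2]| + 2)%N.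
  rewrite E (cardsD1 (a, b)) inE /= Hab (cardsD1 (b, a)).
  rewrite !inE /= xpair_eqE (negbTE (e_neq Hab)) esym Hab /=.
  rewrite andbF /=; lia.
have cV : (2 <= #|V|)%N.
  have := subset_leq_card (subsetT [set a; b]); rewrite cards2 Hab'.
  by rewrite cardsT.
have := ecard; rewrite c2 => H; lia.
Qed.

Lemma inD1T (w b : V) : (w \in [set: V] :\ b) = (w != b).
Proof. by rewrite !inE andbT. Qed.

Lemma Tsub_compl a b : e a b -> Tsub e a b = ~: Tsub e b a.
Proof.
move=> Hab; apply/setP => z; rewrite in_setC; apply/idP/idP.
  by move=> H1; apply/negP => H2; exact: bridge Hab H1 H2.
move=> H2.
have /connectP [p Hp Ez] := econ b z.
rewrite Ez in H2 *.
case: (shortenP Hp) H2 => p' Hp' Hu _.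
have Hab' : a != b by exact: e_neq.
case Ha: (a \in p').
  move: Hp' Hu; case/splitPr: Ha => p1 p2.
  rewrite cat_path last_cat /= => /andP [_ /andP [_ Hp2]] Hu H2.
  exfalso; move/negP: H2; apply; rewrite inTsub.
  have Hb : b \notin a :: p2.
    move: Hu; rewrite /= mem_cat negb_or => /andP [/andP [_ H] _]; exact: H.
  have Hl : last a p2 \in a :: p2 by exact: mem_last.
  apply/andP; split; first by apply: contraNneq Hb => <-.
  apply/connectP; exists p2 => //; apply: restr_path => //.
  apply/allP => w Hw; rewrite /= !inE ?andbT; by apply: contraNneq Hb => <-.
move=> _; rewrite inTsub.
have Hb : a \notin b :: p' by rewrite inE negb_or Hab' Ha.
apply/andP; split; first by apply: contraNneq Hb => <-; exact: mem_last.
apply/connectP; exists p' => //; apply: restr_path => //.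
apply/allP => w Hw; rewrite /= !inE ?andbT; by apply: contraNneq Hb => <-.
Qed.

Lemma comp_Tsub a b c : e a b -> e b c -> c != a -> Defs.comp e (Tsub e a b) b c = Tsub e b c.
Proof.
move=> Hab Hbc Hca.
have Hab' : a != b by exact: e_neq.
have Hbc' : b != c by exact: e_neq.
have Hcab : c \in Tsub e a b by rewrite (Tsub_nb Hab Hbc).
have Hcba : c \notin Tsub e b a by apply/negP => H; exact: bridge Hab Hcab H.
have S1 : Tsub e b a \subset Tsub e c b.
  apply/subsetP => z Hz; move: (Hz); rewrite inTsub => /andP [Hzb Haz].
  have cl := restr_closure (B := Tsub e b a) Haz.
  have cl' : connect (restr (([set: V] :\ b) :&: Tsub e b a)) a z.
    apply: cl => w Hw; rewrite inTsub Hw andbT.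
    have := restr_in Hw; rewrite !inD1T; apply; exact: Hab'.
  rewrite inTsub; apply/andP; split; first by apply: contraNneq Hcba => <-.
  apply: (connect_trans (connect1 (_ : restr ([set: V] :\ c) b a))).
    apply/and3P; split; [by rewrite esym | by rewrite inD1T | by rewrite inD1T eq_sym].
  apply: restr_mono cl'; apply/subsetP => w; rewrite in_setI => /andP [_ Hw].
  rewrite inD1T; by apply: contraNneq Hcba => <-.
have S2 : Tsub e b c \subset Tsub e a b :\ b.
  apply/subsetP => z Hz; rewrite in_setD1.
  have Hzb : z != b by move: Hz; rewrite inTsub => /andP [].
  rewrite Hzb /= (Tsub_compl Hab) inE; apply/negP => H.
  exact: bridge Hbc Hz (subsetP S1 _ H).
apply/setP => z; rewrite {1}/Defs.comp inE; apply/idP/idP.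
  case/andP => Hz Hc.
  have Hc' : connect (restr (Tsub e a b :\ b)) c z by exact: Hc.
  rewrite inTsub; move: Hz; rewrite in_setD1 => /andP [-> _] /=.
  apply: restr_mono Hc'; apply/subsetP => w; rewrite !in_setD1 in_setT => /andP [-> _] //.
move=> Hz; rewrite (subsetP S2 _ Hz) /=.
move: Hz; rewrite inTsub => /andP [_ Hcz].
have cl := restr_closure (B := Tsub e b c) Hcz.
change (connect (restr (Tsub e a b :\ b)) c z).
apply: restr_mono (cl _); first by apply/subsetP => w; rewrite inE => /andP [_ /(subsetP S2)].
move=> w Hw; rewrite inTsub Hw andbT.
have := restr_in Hw; rewrite !inD1T; apply; by rewrite eq_sym.
Qed.

Lemma comp_same (S : {set V}) u v z : z \in Defs.comp e S u v -> Defs.comp e S u z = Defs.comp e S u v.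
Proof.
rewrite /Defs.comp inE => /andP [_ Hvz].
have Hs := sym_connect_sym (restr_sym (S :\ u)).
apply/setP => w; rewrite !inE; congr andb; apply/idP/idP => H.
  exact: connect_trans Hvz H.
apply: connect_trans _ H; rewrite Hs; exact: Hvz.
Qed.

End Tree.

Section Bfuel.
Variables (R : realType) (V : finType) (e : rel V) (rho : R).
Hypothesis tree : is_tree e.
Hypothesis Hrho : 0 <= rho.

Lemma bfuel_S (s : V -> V -> R) n u S :
  bfuel e rho s n.+1 u S =
  Fv rho (enum [set v in S | e u v]) (fun v => s u v + bfuel e rho s n v (Defs.comp e S u v)).
Proof. by []. Qed.

Lemma comp_sub (S : {set V}) u v : Defs.comp e S u v \subset S :\ u.
Proof. by apply/subsetP => z; rewrite inE => /andP []. Qed.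

Lemma comp_self (S : {set V}) u v : v \in S -> e u v -> v \in Defs.comp e S u v.
Proof.
move=> HvS Huv; rewrite /Defs.comp inE connect0 andbT in_setD1 HvS andbT.
by rewrite eq_sym (e_neq tree Huv).
Qed.

Lemma card_comp (S : {set V}) u v : u \in S -> (#|Defs.comp e S u v| < #|S|)%N.
Proof.
move=> Hu; apply: leq_ltn_trans (subset_leq_card (comp_sub S u v)) _.
by rewrite (cardsD1 u S) Hu add1n ltnS.
Qed.

Lemma bfuel_enough (s : V -> V -> R) n m u (S : {set V}) : u \in S -> (#|S| <= n)%N -> (#|S| <= m)%N ->
  bfuel e rho s n u S = bfuel e rho s m u S.
Proof.
elim: n m u S => [|n IH] [|m] u S Hu Hn Hm.
- by [].
- by move: Hn; rewrite leqn0 => /eqP E; move: Hu; rewrite (cards0_eq E) inE.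
- by move: Hm; rewrite leqn0 => /eqP E; move: Hu; rewrite (cards0_eq E) inE.
rewrite !bfuel_S; apply: Fv_ext => v; rewrite mem_enum inE => /andP [HvS Huv].
congr (_ + _); apply: IH; first exact: comp_self.
  by rewrite -ltnS; apply: leq_trans (card_comp _ Hu) Hn.
by rewrite -ltnS; apply: leq_trans (card_comp _ Hu) Hm.
Qed.

Lemma btime_unf (s : V -> V -> R) u (S : {set V}) : u \in S ->
  btime e rho s u S =
  Fv rho (enum [set v in S | e u v]) (fun v => s u v + btime e rho s v (Defs.comp e S u v)).
Proof.
move=> Hu; rewrite /btime.
have : (0 < #|S|)%N by apply/card_gt0P; exists u.
case E: #|S| => [//|n] _; rewrite bfuel_S; apply: Fv_ext => v.
rewrite mem_enum inE => /andP [HvS Huv]; congr (_ + _); apply: bfuel_enough.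
- exact: comp_self.
- by rewrite -ltnS -E; exact: card_comp.
- by [].
Qed.

Lemma bfuel_nonneg (s : V -> V -> R) n u S : (forall a b, e a b -> 0 <= s a b) ->
  0 <= bfuel e rho s n u S.
Proof.
move=> Hs; elim: n u S => [//|n IH] u S; rewrite bfuel_S.
apply: Fv_nonneg => // v; rewrite mem_enum inE => /andP [_ Huv].
by apply: addr_ge0; [exact: Hs | exact: IH].
Qed.

Lemma btime_nonneg (s : V -> V -> R) u S : (forall a b, e a b -> 0 <= s a b) ->
  0 <= btime e rho s u S.
Proof. exact: bfuel_nonneg. Qed.

Lemma bfuel_mono (s s' : V -> V -> R) n u (S : {set V}) : u \in S ->
  (forall a b, e a b -> a \in S -> b \in S -> s a b <= s' a b) ->
  bfuel e rho s n u S <= bfuel e rho s' n u S.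
Proof.
elim: n u S => [//|n IH] u S Hu Hs; rewrite !bfuel_S.
apply: Fv_mono => v; rewrite mem_enum inE => /andP [HvS Huv].
apply: lerD; first exact: Hs.
apply: IH; first exact: comp_self.
move=> a b Hab Ha Hb; have /subsetP Hsub := comp_sub S u v.
apply: Hs => //.
  by have := Hsub _ Ha; rewrite in_setD1 => /andP [].
by have := Hsub _ Hb; rewrite in_setD1 => /andP [].
Qed.

Lemma btime_mono (s s' : V -> V -> R) u (S : {set V}) : u \in S ->
  (forall a b, e a b -> a \in S -> b \in S -> s a b <= s' a b) ->
  btime e rho s u S <= btime e rho s' u S.
Proof. exact: bfuel_mono. Qed.

Lemma btime_eq (s s' : V -> V -> R) u (S : {set V}) : u \in S ->
  (forall a b, e a b -> a \in S -> b \in S -> s a b = s' a b) ->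
  btime e rho s u S = btime e rho s' u S.
Proof.
move=> Hu H; apply/eqP; rewrite eq_le !btime_mono // => a b Hab Ha Hb; by rewrite H.
Qed.

Lemma Vunf (s : V -> V -> R) a b : e a b ->
  btime e rho s b (Tsub e a b) =
  Fv rho (enum ([set v | e b v] :\ a)) (fun z => s b z + btime e rho s z (Tsub e b z)).
Proof.
move=> Hab; rewrite btime_unf; last exact: Tsub_self.
have -> : [set v in Tsub e a b | e b v] = [set v | e b v] :\ a.
  apply/setP => v; rewrite in_setD1 [in RHS]in_set [in LHS]in_set.
  case H: (e b v); rewrite ?andbF ?andbT //; exact: Tsub_nb.
apply: Fv_ext => v; rewrite mem_enum in_setD1 in_set => /andP [Hva Hbv].
by rewrite comp_Tsub.
Qed.

Lemma Vroot (s : V -> V -> R) x :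
  btime e rho s x [set: V] =
  Fv rho (enum [set v | e x v]) (fun z => s x z + btime e rho s z (Tsub e x z)).
Proof.
rewrite btime_unf ?in_setT //.
have -> : [set v in [set: V] | e x v] = [set v | e x v].
  by apply/setP => v; rewrite !in_set /=.
by [].
Qed.

End Bfuel.

Lemma enum_D1 (V : finType) (A : {set V}) v : rem v (enum A) = enum (A :\ v).
Proof.
rewrite rem_filter ?enum_uniq // /enum_mem -filter_predI; apply: eq_filter => w.
by rewrite /= in_setD1.
Qed.

Lemma enum_subset (V : finType) (A B : {set V}) : B \subset A -> enum B = filter (mem B) (enum A).
Proof.
move=> /subsetP H; rewrite /enum_mem -filter_predI; apply: eq_filter => w /=.
by case E: (w \in B); rewrite // (H _ E).
Qed.

Lemma aux1 (R : realType) (r t a b A2 S2 D : R) :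
  r + (t + a) <= A2 -> S2 <= r + (t + b) -> D <= a - b -> D <= A2 - S2.
Proof. lra. Qed.

Lemma aux2 (R : realType) (r t a b S : R) :
  0 <= r -> 0 <= t -> r + (t + a) <= S -> b <= a -> b <= S.
Proof. lra. Qed.

Section PathPart.
Variables (R : realType) (V : finType) (e : rel V) (rho : R).
Hypothesis tree : is_tree e.
Hypothesis Hrho : 0 <= rho.
Variables (s sa : V -> V -> R) (x : V) (B B' M : R).
Hypothesis s_nn : forall a b, e a b -> 0 <= s a b.
Hypothesis HMB : M <= B.

Let VS a b := btime e rho s b (Tsub e a b).
Let VA a b := btime e rho sa b (Tsub e a b).
Let cS u z := s u z + btime e rho s z (Tsub e u z).
Let cA u z := sa u z + btime e rho sa z (Tsub e u z).

Definition Inv w u := [/\ B' - B <= VA u w - VS u w, B <= VS u w & VS w u <= M].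

Lemma VS_nn a b : 0 <= VS a b.
Proof. exact: (btime_nonneg Hrho). Qed.

Lemma cS_nn' u (A : {set V}) : A \subset [set v | e u v] ->
  forall z, z \in enum A -> 0 <= cS u z.
Proof.
move=> /subsetP HA z; rewrite mem_enum => Hz; have := HA _ Hz; rewrite inE => Huz.
by apply: addr_ge0; [exact: s_nn | exact: VS_nn].
Qed.

Lemma D1sub u a : [set v | e u v] :\ a \subset [set v | e u v].
Proof. exact: subD1set. Qed.

Lemma rest_small w u v : e w u -> e u v -> v != w -> VS w u <= M -> B <= VS u w ->
  Fv rho (rem w (enum ([set z | e u z] :\ v))) (cS u) <= cS u w.
Proof.
move=> Hwu Huv Hvw Hc Hb.
rewrite enum_D1.
have Hsub : [set z | e u z] :\ v :\ w \subset [set z | e u z] :\ w.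
  apply/subsetP => z; rewrite !in_setD1 => /andP [-> /andP [_ ->]]; by rewrite andbT.
rewrite (enum_subset Hsub).
apply: le_trans (Fv_filter Hrho _ (cS_nn' (D1sub u w))) _.
rewrite -(Vunf rho tree) // -/(VS w u).
apply: le_trans Hc _; apply: le_trans HMB _; apply: le_trans Hb _.
by rewrite /cS lerDr; apply: s_nn; rewrite (esym tree).
Qed.

Lemma inv_step w u v : e w u -> e u v -> v != w -> sa u w = s u w -> Inv w u -> Inv u v.
Proof.
move=> Hwu Huv Hvw Hsa [Ia Ib Ic].
have Huw : e u w by rewrite (esym tree).
have Hw_in : w \in enum ([set z | e u z] :\ v) by rewrite mem_enum in_setD1 eq_sym Hvw inE.
have Hv_in : v \in enum ([set z | e u z] :\ w) by rewrite mem_enum in_setD1 Hvw inE.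
have Huv' : e v u by rewrite (esym tree).
have LA : rho + cA u w <= VA v u.
  rewrite /VA (Vunf rho tree _ Huv') /cA; exact: (Fv_lb Hrho _ Hw_in).
have US : VS v u <= rho + cS u w.
  rewrite /VS (Vunf rho tree _ Huv'); apply: le_trans (Fv_ub rho _ Hw_in) _.
  rewrite ge_max lexx /= lerD2l; exact: rest_small.
have LS : rho + cS u w <= VS v u.
  rewrite /VS (Vunf rho tree _ Huv') /cS; exact: (Fv_lb Hrho _ Hw_in).
have LS2 : rho + cS u v <= VS w u.
  rewrite /VS (Vunf rho tree _ Hwu) /cS; exact: (Fv_lb Hrho _ Hv_in).
have s1 := s_nn Huw. have s2 := s_nn Huv.
move: LA US LS LS2; rewrite /cA /cS Hsa -/(VA u w) -/(VS u w) -/(VS u v) => LA US LS LS2.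
split.
- exact: aux1 LA US Ia.
- exact: aux2 Hrho s1 LS Ib.
- exact: le_trans (aux2 Hrho s2 LS2 (lexx _)) Ic.
Qed.

Lemma inv_root w : e w x -> sa x w = s x w -> Inv w x ->
  B' - B <= btime e rho sa x [set: V] - btime e rho s x [set: V].
Proof.
move=> Hwx Hsa [Ia Ib Ic].
have Hxw : e x w by rewrite (esym tree).
have Hw_in : w \in enum [set z | e x z] by rewrite mem_enum inE.
have LA : rho + cA x w <= btime e rho sa x [set: V] by rewrite (Vroot rho tree); exact: (Fv_lb Hrho).
have US : btime e rho s x [set: V] <= rho + cS x w.
  rewrite (Vroot rho tree); apply: le_trans (Fv_ub rho _ Hw_in) _ => //.
  rewrite ge_max lexx /= lerD2l enum_D1 -(Vunf rho tree) // -/(VS w x).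
  apply: le_trans Ic _; apply: le_trans HMB _; apply: le_trans Ib _.
  by rewrite /cS lerDr; apply: s_nn.
move: LA US; rewrite /cA /cS Hsa => LA US.
exact: aux1 LA US Ia.
Qed.

Lemma inv_path (T : {set V}) :
  (forall a b, e a b -> a \in T -> b \in T -> sa a b = s a b) ->
  forall p w u, e w u -> path e u p -> last u p = x -> uniq (w :: u :: p) ->
  all (mem T) (u :: p) -> sa u w = s u w -> Inv w u ->
  B' - B <= btime e rho sa x [set: V] - btime e rho s x [set: V].
Proof.
move=> HT; elim=> [|v p IH] w u Hwu /=.
  move=> _ /= Eux _ _; subst u; exact: inv_root.
case/andP => Huv Hp Hl Hu Hall Hsa HI.
have HuT : u \in T by move: Hall => /= /andP [].
have HvT : v \in T by move: Hall => /= /andP [_ /andP []].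
have Hall' : all (mem T) (v :: p) by move: Hall => /= /andP [].
have Hu' : uniq (u :: v :: p) by move: Hu => /= /andP [].
have Hvw : v != w.
  move: Hu => /= /andP [H _]; apply/negP => /eqP E; move: H; rewrite E !inE eqxx.
  by rewrite !orbT.
apply: (IH u v Huv Hp Hl Hu' Hall').
  by apply: HT => //; rewrite (esym tree).
exact: inv_step Hsa HI.
Qed.

End PathPart.

Section OnPath.
Variables (V : finType) (e : rel V).
Hypothesis esymm : symmetric e.

Lemma on_path_swap x y a b : on_path e x y a b -> on_path e x y b a.
Proof.
case=> p [Hp Hl Hu [i Hi H]]; exists p; split => //; exists i => //.
by rewrite orbC.
Qed.

Lemma on_path_head y x mu : on_path e y x y mu ->
  exists P', [/\ path e mu P', last mu P' = x & uniq (y :: mu :: P')] /\ e y mu.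
Proof.
case=> p [Hp Hl Hu [i Hi H]].
have Hs : (0 < size (y :: p))%N by [].
case/orP: H => /andP [/eqP E1 /eqP E2].
  have Hi0 : i = 0%N.
    have Hi' : (i < size (y :: p))%N by rewrite /= ltnS ltnW.
    apply/eqP; rewrite -(nth_uniq y Hi' Hs Hu).
    by rewrite E1 /=.
  subst i; clear Hs; case: p Hp Hl Hu Hi E1 E2 => [//|m P'] /= /andP [Hym HP] Hl Hu _ _ Em.
  subst m; exists P'; split => //; split => //.
have : (i.+1 == 0)%N.
  rewrite -(nth_uniq y (_ : (i.+1 < size (y :: p))%N) Hs Hu) //=.
  by rewrite /= in E2; rewrite E2.
by [].
Qed.

Lemma on_path_rev y x mu P' : path e mu P' -> last mu P' = x -> uniq (y :: mu :: P') ->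
  e y mu -> on_path e x y y mu.
Proof.
move=> Hp Hl Hu Hym.
set s := mu :: P'.
have Hls : last y s = x by [].
exists (rev (belast y s)); split.
- have := rev_path e y s; rewrite Hls => ->.
  rewrite (@eq_path _ _ e); first by rewrite /= Hym Hp.
  by move=> a b /=; rewrite esymm.
- have E : x :: rev (belast y s) = rev (y :: s).
    by rewrite [in RHS]lastI rev_rcons Hls.
  have : last x (rev (belast y s)) = last y (x :: rev (belast y s)) by [].
  rewrite E => ->; rewrite -nth_last size_rev /= nth_rev //=.
  by rewrite subnn.
- have E : x :: rev (belast y s) = rev (y :: s).
    by rewrite [in RHS]lastI rev_rcons Hls.
  by rewrite E rev_uniq.
- exists (size P').
    by rewrite size_rev size_belast /=.
  have E : x :: rev (belast y s) = rev (y :: s).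
    by rewrite [in RHS]lastI rev_rcons Hls.
  rewrite E nth_rev /=; last by rewrite ltnS leqW.
  rewrite nth_rev /=; last by rewrite !ltnS.
  by rewrite subnn subSn // subnn /= !eqxx orbT.
Qed.

End OnPath.

Lemma tau_part (R : realType) (V : finType) (e : rel V) (rho : R) (s : V -> V -> R)
  (y mu : V) (tau0 : nat) (U : {set V}) (cA : V -> R) :
  is_tree e -> 0 <= rho -> (forall a b, e a b -> 0 <= s a b) -> e y mu ->
  U = [set v | e y v] :\ mu ->
  (forall u, u \in U -> cA u = s y u + btime e rho s u (Tsub e y u)) ->
  let A := sort (fun p q : R => q <= p) [seq cA u | u <- enum U] in
  let a (k : nat) := nth 0 A k.-1 in
  (1 <= tau0 <= #|U|)%N ->
  (forall k : nat, (1 <= k <= #|U|)%N -> k%:R * rho + a k <= tau0%:R * rho + a tau0) ->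
  a tau0 <= s y mu + btime e rho s mu (Tsub e y mu) ->
  rho + btime e rho s y (Tsub e mu y) <= btime e rho s y [set: V].
Proof.
move=> tree Hrho s_nn Hymu HU HcA A a Htau Hmax Hcond.
have Hmuy : e mu y by rewrite (esym tree).
have HB : btime e rho s y (Tsub e mu y) = Fv rho (enum U) cA.
  rewrite (Vunf rho tree _ Hmuy) -HU; apply: Fv_ext => v; rewrite mem_enum => Hv.
  by rewrite HcA.
set q := sort (relpre cA (fun p q : R => q <= p)) (enum U).
have Hq : perm_eq q (enum U) by rewrite /q perm_sort.
have HA : A = map cA q by rewrite /A sort_map.
have Hsz : size q = #|U| by rewrite (perm_size Hq) cardE.
have Hup : Fv rho (enum U) cA <= tau0%:R * rho + a tau0.
  apply: le_trans (Fv_le rho cA mu Hq) _; rewrite /Phi; apply: maxl_le.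
    case/andP: Htau => H1 H2; rewrite -Hsz in H2.
    have : (0 < size q)%N by apply: leq_trans H1 H2.
    by case: (size q).
  move=> z /mapP [i]; rewrite mem_iota add0n => Hi ->.
  have -> : cA (nth mu q i) = a i.+1 by rewrite /a /= HA (nth_map mu).
  by apply: Hmax; rewrite -Hsz /=; move: Hi => /andP [_ ->].
have HsA : size A = #|U| by rewrite HA size_map.
have Hsorted : sorted (fun p q : R => q <= p) A.
  by apply: sort_sorted => p r; exact: le_total.
have Htr : transitive (fun p q : R => q <= p).
  by move=> b c d H1 H2; exact: le_trans H2 H1.
have Hge : forall j, (j < tau0)%N -> a tau0 <= nth 0 A j.
  move=> j Hj; rewrite /a.
  case/andP: Htau => H1 H2.
  apply: (sorted_leq_nth Htr (fun r => lexx r) 0 Hsorted); rewrite ?inE ?HsA.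
  - lia.
  - lia.
  - lia.
have Hcnt : (tau0 <= count (fun r => (a tau0 <= r)%R) A)%N.
  rewrite -(cat_take_drop tau0 A) count_cat; apply: leq_trans (leq_addr _ _).
  have Hts : size (take tau0 A) = tau0.
    by rewrite size_takel // HsA; case/andP: Htau.
  have : all (fun r => (a tau0 <= r)%R) (take tau0 A).
    apply/(all_nthP 0) => j Hj; rewrite Hts in Hj; rewrite nth_take //; exact: Hge.
  by rewrite all_count => /eqP ->; rewrite Hts.
have Hmu : mu \in enum [set v | e y v] by rewrite mem_enum inE.
have Hcnt2 : (tau0.+1 <= count (fun v => (a tau0 <= s y v + btime e rho s v (Tsub e y v))%R)
                  (enum [set v | e y v]))%N.
  rewrite (permP (perm_to_rem Hmu)) /= enum_D1 -HU Hcond /= add1n ltnS.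
  rewrite (@eq_in_count _ _ (fun v => (a tau0 <= cA v)%R)); last first.
    by move=> v; rewrite mem_enum => Hv /=; rewrite HcA.
  by rewrite -(permP Hq) -count_map -HA.
have := Fv_cnt Hrho (isT : (1 <= tau0.+1)%N) Hcnt2.
rewrite -(Vroot rho tree) HB => H.
apply: le_trans H; rewrite -natr1 mulrDl mul1r.
move: Hup; set t1 := Fv _ _ _; set t2 := tau0%:R * rho; set t3 := a tau0 => Hup.
lra.
Qed.

Lemma aux3 (R : realType) (bay bsy bax bsx r c B B' : R) :
  bay <= Num.max (r + c) (r + B') -> r + c <= bsy -> r + B <= bsy -> B <= B' ->
  B' - B <= bax - bsx -> bsx - bsy <= bax - bay.
Proof. rewrite le_max => /orP [] H1 H2 H3 H4 H5; lra. Qed.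

Lemma inE_set_sym (V : finType) (e : rel V) (T : {set V}) a b : symmetric e ->
  inE_set e T a b -> inE_set e T b a.
Proof. by move=> Hs; rewrite /inE_set Hs => /and3P [-> -> ->]. Qed.

Theorem fact3 (R : realType) (V : finType) (e : rel V) (rho : R)
  (wlo whi : V -> V -> R) (x y mu : V) (s : V -> V -> R) (tau0 : nat) :
  is_tree e -> 0 < rho ->
  (forall a b, e a b -> 0 <= wlo a b <= whi a b) ->
  (forall a b, e a b -> wlo a b = wlo b a /\ whi a b = whi b a) ->
  worst_case e rho wlo whi x s ->
  y != x ->
  prime_center e rho s y ->
  (forall a b, e a b -> on_path e x y a b \/ inE_set e (Tsub e y x) a b ->
     s a b = alpha e wlo whi x y a b) ->
  e y mu -> on_path e y x y mu ->
  let U := [set u | e y u & u \in Tbar e y x] in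
  let A := sort (fun p q : R => q <= p)
             [seq s y u + btime e rho s u (Tbar e u y) | u <- enum U] in
  let a (k : nat) := nth 0 A k.-1 in
  (1 <= #|U|)%N ->
  (1 <= tau0 <= #|U|)%N ->
  (forall k : nat, (1 <= k <= #|U|)%N ->
     k%:R * rho + a k <= tau0%:R * rho + a tau0) ->
  (forall k : nat, (1 <= k < tau0)%N ->
     k%:R * rho + a k < tau0%:R * rho + a tau0) ->
  a tau0 <= s y mu + btime e rho s mu (Tsub e y x) ->
  worst_case e rho wlo whi x (alpha e wlo whi x y).
Proof.
move=> tree Hrho Hw Hws Hworst Hyx Hprime Hagree Hymu Hpath U A a HU1 Htau Hmax Hmin Hcond.
set al := alpha e wlo whi x y.
have Hrho0 : 0 <= rho := ltW Hrho.
have esymm := esym tree.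
case: (Hworst) => Hs_sc [y0 Hy0].
have s_nn : forall a b, e a b -> 0 <= s a b.
  move=> a0 b0 H; have [/andP [H1 _] _] := Hs_sc a0 b0 H.
  have /andP [H2 _] := Hw a0 b0 H; exact: le_trans H2 H1.
have [P' [[HP' HlP' HuP'] _]] := on_path_head Hpath.
have Hxy_path : on_path e x y y mu := on_path_rev esymm HP' HlP' HuP' Hymu.
have Hmuy : e mu y by rewrite esymm.
have al_ymu : al y mu = s y mu by rewrite (Hagree y mu Hymu (or_introl Hxy_path)).
have al_muy : al mu y = s mu y.
  by rewrite (Hagree mu y Hmuy (or_introl (on_path_swap Hxy_path))).
have HPin : all (mem (Tsub e y mu)) (mu :: P').
  apply/allP => z Hz; suff : z \in Tsub e y mu by [].
  rewrite inTsub; apply/andP; split.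
    move: HuP' => /= /andP [Hy _]; apply: contraNneq Hy => <-; exact: Hz.
  have Hall : all (mem ([set: V] :\ y)) (mu :: P').
    apply/allP => w Hw'; suff : w \in [set: V] :\ y by []; rewrite inD1T.
    move: HuP' => /= /andP [Hy _]; by apply: contraNneq Hy => <-.
  exact: (path_connect (restr_path HP' Hall)).
have HxT : x \in Tsub e y mu by apply: (allP HPin); rewrite -HlP' mem_last.
have TyX : Tsub e y x = Tsub e y mu by exact: (comp_same tree HxT).
have TmuY : Tsub e mu y = ~: Tsub e y mu := Tsub_compl tree Hmuy.
have TbarYX : Tbar e y x = Tsub e mu y by rewrite /Tbar TyX TmuY.
have TbarYmu : Tbar e y mu = Tsub e mu y by rewrite /Tbar TmuY.
have TbarMuY : Tbar e mu y = Tsub e y mu by rewrite /Tbar TmuY setCK.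
have eqT : forall a b, e a b -> a \in Tsub e y mu -> b \in Tsub e y mu -> al a b = s a b.
  move=> a0 b0 H Ha Hb; symmetry; apply: Hagree => //; right.
  by rewrite /inE_set TyX H Ha Hb.
have eqT' : forall a b, e a b -> a \in Tsub e y mu -> b \in Tsub e y mu -> s a b = al a b.
  by move=> *; symmetry; apply: eqT.
have geT : forall a b, e a b -> a \in Tsub e mu y -> b \in Tsub e mu y -> s a b <= al a b.
  move=> a0 b0 H Ha Hb; rewrite /al /alpha; case: asboolP => [_|H'].
    by have [/andP [_ ->] _] := Hs_sc a0 b0 H.
  exfalso; apply: H'; right; by rewrite /inE_set TbarYX H Ha Hb.
set B := btime e rho s y (Tsub e mu y).
set B' := btime e rho al y (Tsub e mu y).
set M := btime e rho s mu (Tsub e y mu).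
have HMB : M <= B.
  by have := (proj2 Hprime) mu Hymu; rewrite TbarMuY TbarYmu.
have HX : B' - B <= btime e rho al x [set: V] - btime e rho s x [set: V].
  apply: (inv_path tree Hrho0 s_nn HMB eqT (p := P') (w := y) (u := mu)) => //.
have Hmu_in : mu \in enum [set v | e y v] by rewrite mem_enum inE.
have Y1 : btime e rho al y [set: V] <= Num.max (rho + (s y mu + M)) (rho + B').
  rewrite (Vroot rho tree); apply: le_trans (Fv_ub rho _ Hmu_in) _.
  rewrite enum_D1 -(Vunf rho tree _ Hmuy) -/B' al_ymu.
  have -> : btime e rho al mu (Tsub e y mu) = M.
    symmetry; apply: (btime_eq rho tree); first exact: Tsub_self.
    exact: eqT'.
  by [].
have Y2 : rho + (s y mu + M) <= btime e rho s y [set: V].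
  rewrite (Vroot rho tree); exact: (Fv_lb Hrho0 _ Hmu_in).
have Y3 : rho + B <= btime e rho s y [set: V].
  apply: (tau_part tree Hrho0 s_nn Hymu (U := U)
    (cA := fun u => s y u + btime e rho s u (Tbar e u y)) (tau0 := tau0)).
  - apply/setP => v; rewrite /U TbarYX in_setD1.
    apply/idP/idP.
      rewrite inE => /andP [H1 H2]; rewrite inE H1 andbT.
      by rewrite -(Tsub_nb tree Hmuy H1).
    case/andP => H1; rewrite inE => H2; rewrite inE H2 /=.
    by rewrite (Tsub_nb tree Hmuy H2).
  - move=> u; rewrite /U inE => /andP [Hyu _].
    by rewrite /= /Tbar (Tsub_compl tree Hyu).
  - exact: Htau.
  - exact: Hmax.
  - by rewrite -TyX.
have Y4 : B <= B'.
  apply: (btime_mono rho tree); first exact: Tsub_self.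
  exact: geT.
have Hreg : regret e rho s x y <= regret e rho al x y.
  rewrite /regret; exact: aux3 Y1 Y2 Y3 Y4 HX.
split.
  move=> a0 b0 H; have /andP [H0 Hlh] := Hw a0 b0 H; split.
    rewrite /al /alpha; case: asboolP => _; apply/andP; split => //.
  have Hba : e b0 a0 by rewrite esymm.
  have [Hws1 Hws2] := Hws a0 b0 H.
  rewrite /al /alpha; case: asboolP => Hp1; case: asboolP => Hp2 //.
    exfalso; apply: Hp2; case: Hp1 => [Hp|Hp]; [left; exact: on_path_swap | right; exact: inE_set_sym].
  exfalso; apply: Hp1; case: Hp2 => [Hp|Hp]; [left; exact: on_path_swap | right; exact: inE_set_sym].
exists y => s' y' Hs'.
apply: le_trans (Hy0 s' y' Hs') _; apply: le_trans _ Hreg.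
rewrite /regret lerD2l lerN2; exact: (proj1 Hprime) y0.
Qed.
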